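(* Let $c>2$ be a real number. Suppose that every separating, union-closed finite collection of sets $\mathcal{A}$ containing at least one non-empty set and satisfying $|\mathcal{A}|\le c\cdot|U(\mathcal{A})|$ has an element of $U(\mathcal{A})$ belonging to at least half of the sets in $\mathcal{A}$. Then for every union-closed finite collection of sets $\mathcal{B}$ containing at least one non-empty set, there exists $x\in U(\mathcal{B})$ with $|x|_{\mathcal{B}}\ge \frac{c-2}{2(c-1)}\cdot|\mathcal{B}|$.
   Context: A collection $\mathcal{A}$ of sets is union-closed if $S,T\in\mathcal{A}$ implies $S\cup T\in\mathcal{A}$. The universe $U(\mathcal{A})$ is $\bigcup_{A\in\mathcal{A}}A$. $\mathcal{A}$ is separating if for any two distinct elements of $U(\mathcal{A})$ there is a set in $\mathcal{A}$ containing one of them but not the other. For an element $x$, $|x|_{\mathcal{B}}$ denotes the number of sets in $\mathcal{B}$ containing $x$. *)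

(* Defs.v *)
From mathcomp Require Import all_boot all_order all_algebra.
From mathcomp Require Import reals.
Set Implicit Arguments. Unset Strict Implicit. Unset Printing Implicit Defensive.

Definition union_closed (T : finType) (A : {set {set T}}) : Prop :=
  forall S S' : {set T}, S \in A -> S' \in A -> S :|: S' \in A.

Definition universe (T : finType) (A : {set {set T}}) : {set T} :=
  \bigcup_(S in A) S.

Definition separating (T : finType) (A : {set {set T}}) : Prop :=
  forall x y : T, x \in universe A -> y \in universe A -> x != y ->
    exists2 S, S \in A & (x \in S) != (y \in S).

Definition deg (T : finType) (x : T) (A : {set {set T}}) : nat :=
  #|[set S in A | x \in S]|.

Definition has_nonempty (T : finType) (A : {set {set T}}) : Prop :=
  exists2 S, S \in A & S != set0.

(* Main.v *)
Require Import Defs.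
From mathcomp Require Import all_boot all_order all_algebra.
From mathcomp Require Import reals.
From mathcomp Require Import lra.
Import Order.TTheory GRing.Theory Num.Theory.

Section Sep.
Variables (T : finType) (B : {set {set T}}).
Definition tr (x : T) : {set {set T}} := [set S in B | x \in S].
Definition phi (S : {set T}) : {set {set {set T}}} := tr @: S.

Lemma trP (x : T) {S : {set T}} : S \in B -> (tr x \in phi S) = (x \in S).
Proof.
move=> SB; apply/imsetP/idP => [[y yS /setP e]|xS]; last by exists x.
by have := e S; rewrite !inE SB yS.
Qed.

Lemma phi_inj : {in B &, injective phi}.
Proof. by move=> S S' SB S'B e; apply/setP=> x; rewrite -(trP x SB) e (trP _ S'B). Qed.

Lemma sep_reduce : union_closed B -> has_nonempty B ->
  exists T2 : finType, exists B2 : {set {set T2}},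
   [/\ union_closed B2, separating B2, has_nonempty B2, #|B2| = #|B| &
     forall z, z \in universe B2 -> exists2 x, x \in universe B & deg z B2 = deg x B].
Proof.
move=> hU [S0 S0B S0n].
exists {set {set T}}; exists (phi @: B); split.
- move=> _ _ /imsetP[S SB ->] /imsetP[S' S'B ->]; rewrite -imsetU; apply: imset_f; exact: hU.
- move=> z1 z2 /bigcupP[_ /imsetP[S1 S1B ->] /imsetP[x1 x1S ->]].
  move=> /bigcupP[_ /imsetP[S2 S2B ->] /imsetP[x2 x2S ->]] ne.
  case: (pickP (fun S => (S \in B) && ((x1 \in S) != (x2 \in S)))) => [S /andP[SB h]|none].
    by exists (phi S); [exact: imset_f | rewrite !(trP _ SB)].
  exfalso; move/eqP: ne; apply; apply/setP => S; rewrite !inE.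
  by have := none S; case: (S \in B) => //= /negbFE/eqP.
- exists (phi S0); first exact: imset_f.
  by rewrite /phi imset_eq0.
- exact: card_in_imset phi_inj.
- move=> z /bigcupP[_ /imsetP[S1 S1B ->] /imsetP[x xS ->]].
  exists x; first by apply/bigcupP; exists S1.
  rewrite /deg.
  have -> : [set S2 in phi @: B | tr x \in S2] = phi @: [set S in B | x \in S].
    apply/setP=> S2; rewrite inE; apply/andP/imsetP.
      by case=> /imsetP[S SB ->] xin; exists S => //; rewrite inE SB -(trP x SB) xin.
    case=> S; rewrite inE => /andP[SB xS2] ->; split; [exact: imset_f | by rewrite (trP _ SB)].
  apply: card_in_imset => S S'; rewrite !inE => /andP[SB _] /andP[S'B _].
  exact: phi_inj.
Qed.
End Sep.
Section Pad.
Variables (T : finType) (B : {set {set T}}) (k : nat).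
Let U := universe B.
Definition psi (S : {set T}) : {set T + 'I_k} :=
  [set z : T + 'I_k | if z is inl x then x \in S else false].
Definition NN (i : 'I_k) : {set T + 'I_k} :=
  [set z : T + 'I_k | match z with inl x => x \in U | inr j => (j <= i)%N end].
Definition B3 := psi @: B :|: NN @: [set: 'I_k].

Lemma psi_inj : injective psi.
Proof. by move=> S S' e; apply/setP => x; have /setP/(_ (inl x)) := e; rewrite !inE. Qed.

Lemma NN_inj : injective NN.
Proof.
move=> i j e; apply/val_inj/eqP; rewrite eqn_leq.
have /setP/(_ (inr i)) := e; have /setP/(_ (inr j)) := e; rewrite !inE !leqnn.
by move=> -> <-.
Qed.

Lemma inU S x : S \in B -> x \in S -> x \in U.
Proof. by move=> SB xS; apply/bigcupP; exists S. Qed.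

Lemma inlU {a} : inl a \in universe B3 -> a \in U.
Proof.
case/bigcupP => S3; rewrite inE => /orP[/imsetP[S SB ->]|/imsetP[i _ ->]]; rewrite inE.
  exact: inU.
by [].
Qed.

Lemma pad : union_closed B -> separating B -> has_nonempty B ->
  [/\ union_closed B3, separating B3, has_nonempty B3, (#|B3| = #|B| + k)%N &
      (k.+1 <= #|universe B3|)%N /\
      forall z, z \in universe B3 ->
        (exists2 a, a \in U & (deg z B3 <= deg a B + k)%N) \/ (deg z B3 <= k)%N].
Proof.
move=> hU hS [S0 S0B S0n].
have [a0 a0S] := set0Pn _ S0n.
have NNmax (i j : 'I_k) : (i <= j)%N -> NN i :|: NN j = NN j.
  move=> ij; apply/setP => -[x|l]; rewrite !inE ?orbb //.
  by rewrite orb_idl // => h; exact: leq_trans h ij.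
have psiN S (i : 'I_k) : S \in B -> psi S :|: NN i = NN i.
  move=> SB; apply/setP => -[x|l]; rewrite !inE //.
  by case xS: (x \in S) => //=; symmetry; exact: inU xS.
have B3psi S : S \in B -> psi S \in B3.
  by move=> SB; rewrite inE imset_f.
have B3N (i : 'I_k) : NN i \in B3.
  by rewrite inE imset_f ?orbT // inE.
split.
- move=> _ _ /setUP[/imsetP[S SB ->]|/imsetP[i _ ->]] /setUP[/imsetP[S' S'B ->]|/imsetP[j _ ->]].
  + have -> : psi S :|: psi S' = psi (S :|: S').
      by apply/setP => -[x|l]; rewrite !inE.
    exact/B3psi/hU.
  + by rewrite psiN.
  + by rewrite setUC psiN.
  + case: (leqP i j) => ij; first by rewrite NNmax.
    by rewrite setUC NNmax // ltnW.
- move=> [x|i] [y|j] /= hx hy ne.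
  + have xU := inlU hx; have yU := inlU hy.
    have [S SB h] := hS x y xU yU (contra (fun e => introT eqP (f_equal inl (eqP e))) ne).
    by exists (psi S); [exact: B3psi | rewrite !inE].
  + have /bigcupP[S SB xS] := inlU hx.
    by exists (psi S); [exact: B3psi | rewrite !inE xS].
  + have /bigcupP[S SB yS] := inlU hy.
    by exists (psi S); [exact: B3psi | rewrite !inE yS].
  + case: (ltngtP i j) => ij.
    * by exists (NN i) => //; rewrite !inE leqnn leqNgt ij.
    * by exists (NN j) => //; rewrite !inE leqnn leqNgt ij.
    * by move: ne; rewrite (val_inj ij) eqxx.
- exists (psi S0); first exact: B3psi.
  by apply/set0Pn; exists (inl a0); rewrite inE.
- rewrite /B3 cardsU.
  have -> : psi @: B :&: NN @: [set: 'I_k] = set0.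
    apply/setP => S; rewrite !inE; apply/negbTE/negP.
    case/andP => /imsetP[S1 _ ->] /imsetP[i _ e].
    by have /setP/(_ (inr i)) := e; rewrite !inE leqnn.
  rewrite cards0 subn0 card_imset; last exact: psi_inj.
  by rewrite card_imset ?cardsT ?card_ord //; exact: NN_inj.
- split.
  have sub : inl a0 |: (@inr T 'I_k) @: [set: 'I_k] \subset universe B3.
    apply/subsetP => z; rewrite !inE => /orP[/eqP->|/imsetP[j _ ->]]; apply/bigcupP.
      by exists (psi S0); [exact: B3psi | rewrite inE].
    by exists (NN j) => //; rewrite inE.
  apply: leq_trans (subset_leq_card sub).
  rewrite cardsU1 card_imset ?cardsT ?card_ord; last by move=> ? ? [].
  suff -> : inl a0 \notin (@inr T 'I_k) @: [set: 'I_k] by [].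
  by apply/imsetP; case.
  move=> [a|j] hz.
  + left; exists a; first exact: inlU hz.
    rewrite /deg.
    have sub : [set S in B3 | inl a \in S] \subset
               psi @: [set S in B | a \in S] :|: NN @: [set: 'I_k].
      apply/subsetP => S; rewrite !inE => /andP[/orP[/imsetP[S1 S1B ->]|hN] aS].
        by rewrite imset_f // inE S1B; rewrite inE in aS.
      by rewrite hN orbT.
    apply: leq_trans (subset_leq_card sub) _.
    apply: leq_trans (leq_card_setU _ _) _.
    apply: leq_add; first exact: leq_imset_card.
    by apply: leq_trans (leq_imset_card _ _) _; rewrite cardsT card_ord.
  + right; rewrite /deg.
    have sub : [set S in B3 | inr j \in S] \subset NN @: [set: 'I_k].
      apply/subsetP => S; rewrite !inE => /andP[/orP[/imsetP[S1 S1B ->]|hN] aS] //.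
      by rewrite inE in aS.
    apply: leq_trans (subset_leq_card sub) _.
    by apply: leq_trans (leq_imset_card _ _) _; rewrite cardsT card_ord.
Qed.
End Pad.

Arguments sep_reduce {T B}.
Arguments pad {T B} k.
Arguments B3 {T} B k.
Local Open Scope ring_scope.

Theorem theorem2 (R : realType) (c : R) (hc : 2 < c)
  (H : forall (T : finType) (A : {set {set T}}),
      union_closed A -> separating A -> has_nonempty A ->
      (#|A|%:R <= c * (#|universe A|%:R) :> R) ->
      exists2 x, x \in universe A & (#|A| <= 2 * deg x A)%N) :
  forall (T : finType) (B : {set {set T}}),
    union_closed B -> has_nonempty B ->
    exists2 x, x \in universe B &
      (c - 2) / (2 * (c - 1)) * (#|B|%:R) <= (deg x B)%:R :> R.
Proof.
move=> T B hU hne.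
have [T2 [B2 [hU2 hS2 hne2 cB2 hdeg]]] := sep_reduce hU hne.
have mpos : (0 < #|B2|)%N.
  by case: hne2 => S SB _; apply/card_gt0P; exists S.
have c1 : 0 < c - 1 by lra.
set m := #|B2| in mpos cB2.
set k := Num.Def.truncn (m%:R / (c - 1) : R).
have /andP[kle klt] := truncn_itv (divr_ge0 (ler0n R m) (ltW c1)).
rewrite -/k ler_pdivlMr // in kle.
rewrite ltr_pdivrMr // in klt.
have [u3 s3 ne3 c3 [cu3 hz]] := pad k hU2 hS2 hne2.
have hle : (#|B3 B2 k|%:R <= c * #|universe (B3 B2 k)|%:R :> R).
  rewrite c3 natrD.
  have : (k.+1%:R <= #|universe (B3 B2 k)|%:R :> R) by rewrite ler_nat.
  rewrite -addn1 natrD in klt *.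
  nra.
have [z zU hz2] := H _ _ u3 s3 ne3 hle.
rewrite c3 in hz2.
case: (hz z zU) => [[a aU ha] | hk].
- have [x xU ex] := hdeg a aU.
  exists x => //.
  rewrite -cB2 -ex.
  have h1 : (m + k <= 2 * (deg a B2 + k))%N := leq_trans hz2 (leq_mul (leqnn 2) ha).
  have h2 : (m%:R + k%:R <= 2 * ((deg a B2)%:R + k%:R) :> R).
    by rewrite -!natrD -(natrM R 2) ler_nat.
  rewrite mulrAC ler_pdivrMr; last by lra.
  nra.
- have h1 : (m <= k)%N.
    by have := leq_trans hz2 (leq_mul (leqnn 2) hk); rewrite mul2n -addnn leq_add2r.
  have h2 : (m%:R <= k%:R :> R) by rewrite ler_nat.
  have h3 : (1 <= m%:R :> R) by rewrite ler1n.
  exfalso; nra.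
Qed.
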